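(* Let $\mathcal{X}$ be a finite set and $X=(X_1,\dots,X_n)$ a random vector in $\mathcal{X}^n$ satisfying a $\mathfrak{d}$-LSI$(\sigma^2)$. Let $\mathcal{F}$ be a family of functions $f:\mathcal{X}\to\mathbb{R}$ and for each $f$ let $c(f)\ge0$ satisfy $|f(x)-f(y)|\le c(f)$ for all $x,y\in\mathcal{X}$, with $\sup_{f\in\mathcal{F}}c(f)<\infty$. Let $g=g(X)=\sup_{f\in\mathcal{F}}\big|\sum_{j=1}^nf(X_j)\big|$. Then for every $t\ge0$, \[ \mathbb{P}(g\ge\mathbb{E}g+t)\le2\exp\Big(-\frac{t^2}{15\sigma^2n\sup_{f\in\mathcal{F}}c(f)^2}\Big). \]
   Context: $\mathfrak{d}$-LSI$(\sigma^2)$: with $\mu$ the law of $X$ and $\mu(\cdot\mid x_{i^c})$ the conditional law of $X_i$ given $X_j=x_j$ ($j\neq i$), set $\mathfrak{d}_iF(x)^2=\mathrm{Var}_{\mu(\cdot\mid x_{i^c})}(F(x_{i^c},\cdot))$ and $|\mathfrak{d}F|^2=\sum_i\mathfrak{d}_iF^2$; $\mu$ satisfies it if $\mathrm{Ent}_\mu(F^2)\le2\sigma^2\int|\mathfrak{d}F|^2d\mu$ for all $F:\mathcal{X}^n\to\mathbb{R}$, where $\mathrm{Ent}_\mu(h)=\int h\log h\,d\mu-\int h\,d\mu\log\int h\,d\mu$. *)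

(* Defs.v *)
From Stdlib Require Import Reals.
From mathcomp Require Import all_boot.

Set Implicit Arguments.
Unset Strict Implicit.
Unset Printing Implicit Defensive.

Local Open Scope R_scope.

Definition rsum (I : finType) (F : I -> R) : R := \big[Rplus/0]_(i : I) F i.

Definition config (T : finType) (n : nat) := {ffun 'I_n -> T}.

Definition upd (T : finType) (n : nat) (x : config T n) (i : 'I_n) (a : T)
  : config T n := [ffun j => if j == i then a else x j].

Definition is_prob (I : finType) (mu : I -> R) : Prop :=
  (forall x, 0 <= mu x) /\ rsum mu = 1.

Definition Exp (I : finType) (mu : I -> R) (F : I -> R) : R :=
  rsum (fun x => mu x * F x).

Definition Ent (I : finType) (mu : I -> R) (h : I -> R) : R :=
  Exp mu (fun x => h x * ln (h x)) - Exp mu h * ln (Exp mu h).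

Definition Prob (I : finType) (mu : I -> R) (A : I -> Prop)
  (Adec : forall x, {A x} + {~ A x}) : R :=
  rsum (fun x => if Adec x then mu x else 0).
Arguments Prob {I} mu {A} Adec.

(* Conditional law mu(. | x_{i^c}) of X_i given X_j = x_j (j <> i):
   p(a) = mu(x[i:=a]) / sum_b mu(x[i:=b]). (When the denominator is 0 all
   numerators are 0 as well, so p = 0; such x have mu-mass 0.) *)
Definition cond (T : finType) (n : nat) (mu : config T n -> R)
  (x : config T n) (i : 'I_n) (a : T) : R :=
  mu (upd x i a) / rsum (fun b => mu (upd x i b)).

(* dd_i F(x)^2 = Var_{mu(.|x_{i^c})} (F(x_{i^c}, .)). *)
Definition dsq (T : finType) (n : nat) (mu : config T n -> R)
  (F : config T n -> R) (i : 'I_n) (x : config T n) : R :=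
  let p := cond mu x i in
  let m := rsum (fun a => p a * F (upd x i a)) in
  rsum (fun a => p a * (F (upd x i a) - m) ^ 2).

Definition dnorm2 (T : finType) (n : nat) (mu : config T n -> R)
  (F : config T n -> R) (x : config T n) : R :=
  rsum (fun i => dsq mu F i x).

Definition dLSI (T : finType) (n : nat) (mu : config T n -> R) (sigma2 : R)
  : Prop :=
  forall F : config T n -> R,
    Ent mu (fun x => F x ^ 2) <= 2 * sigma2 * Exp mu (dnorm2 mu F).

(* Main.v *)
Require Import Defs.
From HB Require Import structures.
From Stdlib Require Import Reals Lra FunctionalExtensionality Classical.
From mathcomp Require Import all_boot.
Local Open Scope R_scope.
Set Implicit Arguments. Unset Strict Implicit.

Lemma Rplus_assoc' : associative Rplus. Proof. move=> a b c; ring. Qed.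
HB.instance Definition _ := Monoid.isComLaw.Build R 0 Rplus Rplus_assoc' Rplus_comm Rplus_0_l.

Section Sums.
Variable I : finType.

Lemma rsum_ext (F G : I -> R) : (forall x, F x = G x) -> rsum F = rsum G.
Proof. move=> H; rewrite /rsum; apply: eq_bigr => i _; exact: H. Qed.

Lemma rsum_le (F G : I -> R) : (forall x, F x <= G x) -> rsum F <= rsum G.
Proof.
move=> H; rewrite /rsum; apply: (big_rec2 (fun a b => a <= b)); first lra.
move=> i y1 y2 _ Hy; have := H i; lra.
Qed.

Lemma rsum_plus (F G : I -> R) : rsum (fun x => F x + G x) = rsum F + rsum G.
Proof. by rewrite /rsum big_split. Qed.

Lemma rsum_scal (k : R) (F : I -> R) : rsum (fun x => k * F x) = k * rsum F.
Proof.
rewrite /rsum; apply: (big_rec2 (fun a b => a = k * b)); first ring.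
by move=> i y1 y2 _ ->; ring.
Qed.

Lemma rsum_scalr (k : R) (F : I -> R) : rsum (fun x => F x * k) = rsum F * k.
Proof. rewrite (rsum_ext (G := fun x => k * F x)); last by move=> x; ring.
rewrite rsum_scal; ring. Qed.

Lemma rsum_opp (F : I -> R) : rsum (fun x => - F x) = - rsum F.
Proof. rewrite (rsum_ext (G := fun x => (-1) * F x)); last by move=> x; ring.
rewrite rsum_scal; ring. Qed.

Lemma rsum_minus (F G : I -> R) : rsum (fun x => F x - G x) = rsum F - rsum G.
Proof. rewrite (rsum_ext (G := fun x => F x + - G x)) //.
by rewrite rsum_plus rsum_opp. Qed.

Lemma rsum0 : rsum (fun _ : I => 0) = 0.
Proof. by rewrite /rsum big1. Qed.

Lemma rsum_nonneg (F : I -> R) : (forall x, 0 <= F x) -> 0 <= rsum F.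
Proof. move=> H; rewrite -rsum0; exact: rsum_le. Qed.

Lemma rsum_D1 (F : I -> R) (j : I) :
  rsum F = F j + \big[Rplus/0]_(i | i != j) F i.
Proof. by rewrite /rsum (bigD1 j). Qed.

Lemma rsum_term (F : I -> R) (j : I) : (forall x, 0 <= F x) -> F j <= rsum F.
Proof.
move=> H; rewrite (rsum_D1 _ j).
have : 0 <= \big[Rplus/0]_(i | i != j) F i.
  apply: (big_rec (fun a => 0 <= a)); first lra.
  move=> i y _ Hy; have := H i; lra.
lra.
Qed.

Lemma rsum_pos (F : I -> R) (j : I) : (forall x, 0 <= F x) -> 0 < F j -> 0 < rsum F.
Proof. move=> H Hj; have := rsum_term j H; lra. Qed.

End Sums.

Lemma rsum_const (n : nat) (k : R) : rsum (fun _ : 'I_n => k) = INR n * k.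
Proof.
rewrite /rsum; elim: n => [|n IH]; first by rewrite big_ord0 /=; ring.
rewrite big_ord_recr /= IH; case: n {IH} => [|n] /=; ring.
Qed.

Section Upd.
Variables (T : finType) (n : nat).
Implicit Types (x : config T n) (i : 'I_n).

Lemma upd_at x i a : upd x i a i = a.
Proof. by rewrite ffunE eqxx. Qed.

Lemma upd_upd x i a b : upd (upd x i a) i b = upd x i b.
Proof. by apply/ffunP => j; rewrite !ffunE; case: eqP. Qed.

Lemma upd_id x i : upd x i (x i) = x.
Proof. by apply/ffunP => j; rewrite !ffunE; case: eqP => [->|]. Qed.

Lemma upd_other x i a j : j != i -> upd x i a j = x j.
Proof. by rewrite ffunE => /negbTE ->. Qed.

Definition Zc (mu : config T n -> R) x i := rsum (fun b => mu (upd x i b)).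

Lemma Zc_upd mu x i a : Zc mu (upd x i a) i = Zc mu x i.
Proof. by apply: rsum_ext => b; rewrite upd_upd. Qed.

Lemma tower (mu : config T n -> R) i (h : config T n -> R) :
  (forall x, 0 <= mu x) ->
  rsum (fun x => mu x * rsum (fun a => cond mu x i a * h (upd x i a)))
  = rsum (fun x => mu x * h x).
Proof.
move=> mu0.
set F := fun x a => mu x * (cond mu x i a * h (upd x i a)).
have -> : rsum (fun x => mu x * rsum (fun a => cond mu x i a * h (upd x i a)))
   = rsum (fun x => rsum (fun a => F x a)).
  by apply: rsum_ext => x; rewrite -rsum_scal.
rewrite {1}/rsum.
have E1 : \big[Rplus/0]_(x : config T n) rsum (fun a => F x a)
   = \big[Rplus/0]_(p : config T n * T) F p.1 p.2.
  by rewrite /rsum pair_big.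
rewrite E1.
pose hh := fun p : config T n * T => (upd p.1 i p.2, p.1 i).
have hhK : involutive hh.
  by case=> x a; rewrite /hh /= upd_upd upd_id upd_at.
rewrite (reindex_inj (inv_inj hhK)) /=.
rewrite -(pair_big predT predT (fun y b => F (upd y i b) (y i))) /=.
apply: rsum_ext => y.
rewrite /F.
have Hc : forall b, mu (upd y i b) * (cond mu (upd y i b) i (y i) * h (upd (upd y i b) i (y i)))
   = mu (upd y i b) * (mu y * / Zc mu y i * h y).
  move=> b; rewrite /cond upd_upd upd_id.
  have := Zc_upd mu y i b; rewrite /Zc => ->; rewrite /Rdiv; ring.
rewrite -/(rsum _) (rsum_ext Hc) rsum_scalr.
have Hy : mu y <= Zc mu y i.
  rewrite /Zc; have := rsum_term (F:=fun b => mu (upd y i b)) (y i).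
  rewrite upd_id; apply => b; exact: mu0.
rewrite -/(Zc mu y i).
case: (Req_dec (Zc mu y i) 0) => HZ.
  have -> : mu y = 0 by have := mu0 y; lra.
  ring.
field; exact: HZ.
Qed.

End Upd.

Lemma rsum_exchange (I J : finType) (H : I -> J -> R) :
  rsum (fun x => rsum (fun j => H x j)) = rsum (fun j => rsum (fun x => H x j)).
Proof. by rewrite /rsum exchange_big. Qed.

Lemma var_le (I : finType) (p Y : I -> R) k :
  (rsum p = 1 \/ forall a, p a = 0) ->
  rsum (fun a => p a * (Y a - rsum (fun b => p b * Y b))^2)
  <= rsum (fun a => p a * (Y a - k)^2).
Proof.
case=> [H1|H0].
  set m := rsum (fun b => p b * Y b).
  have -> : rsum (fun a => p a * (Y a - k)^2) =
     rsum (fun a => p a * (Y a - m)^2 + (2 * (p a * Y a) - (m + k) * p a) * (m - k)).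
    by apply: rsum_ext => a; ring.
  rewrite rsum_plus rsum_scalr rsum_minus rsum_scal rsum_scal -/m H1.
  have : 0 <= (m - k) ^ 2 by apply: pow2_ge_0.
  lra.
rewrite (rsum_ext (G := fun _ => 0)); last by move=> a; rewrite H0; ring.
rewrite (rsum_ext (F := fun a => p a * (Y a - k)^2) (G := fun _ => 0)); last by move=> a; rewrite H0; ring.
lra.
Qed.

Lemma exp_le x y : x <= y -> exp x <= exp y.
Proof. case=> [H|->]; [apply: Rlt_le; exact: exp_increasing | lra]. Qed.

Lemma exp_diff_sq u v d :
  0 <= u - v -> u - v <= d -> (exp u - exp v)^2 <= d^2 * exp (2 * u).
Proof.
move=> H1 H2.
have Hv : exp v = exp u * exp (- (u - v)) by rewrite -exp_plus; f_equal; ring.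
have He := exp_ineq1_le (- (u - v)).
have Hu : 0 < exp u := exp_pos u.
have Hw : exp (- (u - v)) <= 1.
  rewrite -exp_0; apply: exp_le; lra.
have A : 0 <= exp u - exp v by rewrite Hv; nra.
have B : exp u - exp v <= d * exp u by rewrite Hv; nra.
have -> : exp (2 * u) = exp u * exp u by rewrite -exp_plus; f_equal; ring.
nra.
Qed.

Section Cond.
Variables (T : finType) (n : nat) (mu : config T n -> R).
Hypothesis mu0 : forall x, 0 <= mu x.

Lemma cond_ge0 x i a : 0 <= cond mu x i a.
Proof.
rewrite /cond /Rdiv; apply: Rmult_le_pos; first exact: mu0.
case: (Req_dec (rsum (fun b => mu (upd x i b))) 0) => [->|H].
  rewrite Rinv_0; lra.
apply: Rlt_le; apply: Rinv_0_lt_compat.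
have := rsum_nonneg (F := fun b => mu (upd x i b)) (fun b => mu0 _); lra.
Qed.

Lemma cond_sum x i : rsum (cond mu x i) = 1 \/ forall a, cond mu x i a = 0.
Proof.
rewrite /cond /Rdiv.
case: (Req_dec (rsum (fun b => mu (upd x i b))) 0) => [->|H].
  by right => a; rewrite Rinv_0; ring.
left; rewrite (rsum_scalr (I := T) _ (fun a => mu (upd x i a))).
by field.
Qed.

End Cond.

Lemma gdiff (T : finType) (n : nat) (Fam : (T -> R) -> Prop) (c : (T -> R) -> R)
  (supc : R) (g : config T n -> R) :
  (forall f, Fam f -> forall x y : T, Rabs (f x - f y) <= c f) ->
  is_lub (fun r => exists f, Fam f /\ r = c f) supc ->
  (forall x : config T n,
     is_lub (fun r => exists f, Fam f /\ r = Rabs (rsum (fun j : 'I_n => f (x j))))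
            (g x)) ->
  forall x i a, g (upd x i a) <= g x + supc.
Proof.
move=> Hc [Hsup _] Hg x i a.
case: (Hg (upd x i a)) => _; apply => r [f [Hf ->]].
set S' := rsum _; set S := rsum (fun j => f (x j)).
have HD : S' - S = f a - f (x i).
  rewrite /S' /S -rsum_minus (rsum_D1 _ i) upd_at big1 ?Rplus_0_r //.
  by move=> j Hj; rewrite upd_other //; ring.
have H1 : Rabs S <= g x by case: (Hg x) => Hub _; apply: Hub; exists f.
have H2 : Rabs (f a - f (x i)) <= c f := Hc f Hf a (x i).
have H3 : c f <= supc by apply: Hsup; exists f.
have -> : S' = S + (S' - S) by ring.
rewrite HD; have := Rabs_triang S (f a - f (x i)); lra.
Qed.

Lemma pow2_exp_half y : exp (y / 2) ^ 2 = exp y.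
Proof. rewrite /= Rmult_1_r -exp_plus; f_equal; field. Qed.

Lemma ent_bound (T : finType) (n : nat) (mu : config T n -> R) (s2 : R)
  (g : config T n -> R) (c lam : R) :
  0 <= lam -> is_prob mu -> dLSI mu s2 -> 0 <= s2 ->
  (forall x i a, g (upd x i a) <= g x + c) ->
  Ent mu (fun x => exp (lam * g x)) <=
  2 * s2 * (INR n * (lam ^ 2 * c ^ 2)) * rsum (fun x => mu x * exp (lam * g x)).
Proof.
move=> Hl [mu0 mu1] Hlsi Hs2 Hd.
pose F := fun x => exp (lam * g x / 2).
have HF : (fun x => F x ^ 2) = (fun x => exp (lam * g x)).
  by apply: functional_extensionality => x; rewrite /F pow2_exp_half.
have := Hlsi F; rewrite HF => H.
apply: (Rle_trans _ _ _ H).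
rewrite [X in _ <= X]Rmult_assoc; apply: Rmult_le_compat_l; first lra.
pose G := fun x i => lam ^ 2 * c ^ 2 * rsum (fun a => cond mu x i a * exp (lam * g (upd x i a))).
have Hpt : forall x i, dsq mu F i x <= G x i.
  move=> x i; rewrite /dsq; cbv zeta.
  have HH := (@var_le _ (cond mu x i) (fun a => F (upd x i a)) (exp (lam * (g x - c) / 2)) (cond_sum mu x i)).
  apply: (Rle_trans _ _ _ HH).
  rewrite /G -rsum_scal; apply: rsum_le => a.
  have Hp := cond_ge0 mu0 x i a.
  have -> : lam ^ 2 * c ^ 2 * (cond mu x i a * exp (lam * g (upd x i a)))
     = cond mu x i a * ((lam * c) ^ 2 * exp (2 * (lam * g (upd x i a) / 2))).
    have -> : 2 * (lam * g (upd x i a) / 2) = lam * g (upd x i a) by field.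
    ring.
  apply: Rmult_le_compat_l => //.
  rewrite /F; apply: exp_diff_sq.
  - have := Hd (upd x i a) i (x i); rewrite upd_upd upd_id => H1; nra.
  - have := Hd x i a => H1; nra.
apply: (Rle_trans _ (Exp mu (fun x => rsum (fun i => G x i)))).
  rewrite /Exp; apply: rsum_le => x; apply: Rmult_le_compat_l => //.
  by apply: rsum_le => i; apply: Hpt.
rewrite /Exp.
rewrite (rsum_ext (G := fun x => rsum (fun i => mu x * G x i))); last by move=> x; rewrite rsum_scal.
rewrite rsum_exchange.
rewrite (rsum_ext (G := fun i : 'I_n => lam ^ 2 * c ^ 2 * rsum (fun x => mu x * exp (lam * g x)))).
  by rewrite rsum_const; right; ring.
move=> i; rewrite /G.
rewrite (rsum_ext (G := fun x => lam ^ 2 * c ^ 2 * (mu x * rsum (fun a => cond mu x i a * exp (lam * g (upd x i a)))))); last by move=> x; ring.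
by rewrite rsum_scal (tower i (fun y => exp (lam * g y)) mu0).
Qed.

Lemma dlim_eq (f g : R -> R) x l l' :
  (forall y, f y = g y) -> l = l' -> derivable_pt_lim f x l -> derivable_pt_lim g x l'.
Proof.
move=> H <-; have -> : g = f by apply: functional_extensionality => y; rewrite H.
done.
Qed.

Lemma seq_deriv (I : Type) (s : seq I) (f df : I -> R -> R) l :
  (forall i, derivable_pt_lim (f i) l (df i l)) ->
  derivable_pt_lim (fun y => \big[Rplus/0]_(i <- s) f i y) l (\big[Rplus/0]_(i <- s) df i l).
Proof.
move=> H; elim: s => [|a s IH].
  apply: (dlim_eq (f := fun _ => 0)).
  - by move=> y; rewrite big_nil.
  - by rewrite big_nil.
  exact: derivable_pt_lim_const.
have := derivable_pt_lim_plus _ _ _ _ _ (H a) IH.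
apply: dlim_eq; first by move=> y; rewrite big_cons.
by rewrite big_cons.
Qed.

Lemma rsum_deriv (I : finType) (f df : I -> R -> R) l :
  (forall i, derivable_pt_lim (f i) l (df i l)) ->
  derivable_pt_lim (fun y => rsum (fun i => f i y)) l (rsum (fun i => df i l)).
Proof. move=> H; rewrite /rsum; exact: seq_deriv. Qed.

Section Herbst.
Variables (I : finType) (mu g : I -> R) (K : R).
Hypothesis mu0 : forall x, 0 <= mu x.
Hypothesis mu1 : rsum mu = 1.

Definition LL l := rsum (fun x => mu x * exp (l * g x)).
Definition LL' l := rsum (fun x => mu x * (g x * exp (l * g x))).
Definition EE := rsum (fun x => mu x * g x).

Hypothesis Hent : forall l, 0 < l -> Ent mu (fun x => exp (l * g x)) <= K * l ^ 2 * LL l.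

Lemma LL_pos l : 0 < LL l.
Proof.
have [x Hx] : exists x, 0 < mu x.
  apply: NNPP => Hn.
  have : rsum mu <= rsum (fun _ : I => 0).
    apply: rsum_le => x; apply: Rnot_lt_le => Hx; apply: Hn; by exists x.
  rewrite rsum0; lra.
apply: (rsum_pos (j := x)).
  move=> y; apply: Rmult_le_pos => //; apply: Rlt_le; exact: exp_pos.
apply: Rmult_lt_0_compat => //; exact: exp_pos.
Qed.

Lemma LL0 : LL 0 = 1.
Proof. rewrite /LL -mu1; apply: rsum_ext => x; rewrite Rmult_0_l exp_0; ring. Qed.

Lemma LL'0 : LL' 0 = EE.
Proof. apply: rsum_ext => x; rewrite Rmult_0_l exp_0; ring. Qed.

Lemma LL_deriv l : derivable_pt_lim LL l (LL' l).
Proof.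
apply: (rsum_deriv (f := fun x y => mu x * exp (y * g x))
                   (df := fun x y => mu x * (g x * exp (y * g x)))) => x.
have H1 : derivable_pt_lim (fun y => y * g x) l (g x).
  have := derivable_pt_lim_scal id (g x) l 1 (derivable_pt_lim_id l).
  apply: dlim_eq => [y|]; rewrite /mult_real_fct /id; ring.
have H2 := derivable_pt_lim_comp _ exp _ _ _ H1 (derivable_pt_lim_exp (l * g x)).
have := derivable_pt_lim_scal _ (mu x) _ _ H2.
apply: dlim_eq => [y|]; rewrite /mult_real_fct /Ranalysis1.comp //; ring.
Qed.

Lemma Ent_eq l : Ent mu (fun x => exp (l * g x)) = l * LL' l - LL l * ln (LL l).
Proof.
rewrite /Ent /Exp -/(LL l); congr (_ - _).
rewrite /LL' -rsum_scal; apply: rsum_ext => x; rewrite ln_exp; ring.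
Qed.

Definition psi l := ln (LL l) - l * EE - K * l ^ 2.

Lemma psi_deriv l : derivable_pt_lim psi l (LL' l / LL l - EE - 2 * K * l).
Proof.
have H1 := derivable_pt_lim_comp _ ln _ _ _ (LL_deriv l) (derivable_pt_lim_ln _ (LL_pos l)).
have H2 : derivable_pt_lim (fun y => y * EE + K * y ^ 2) l (EE + 2 * K * l).
  have A := derivable_pt_lim_scal id EE l 1 (derivable_pt_lim_id l).
  have B := derivable_pt_lim_scal _ K _ _ (derivable_pt_lim_pow l 2).
  have := derivable_pt_lim_plus _ _ _ _ _ A B.
  apply: dlim_eq => [y|]; rewrite /plus_fct /mult_real_fct /id /=; try ring.
have := derivable_pt_lim_minus _ _ _ _ _ H1 H2.
apply: dlim_eq => [y|]; rewrite /minus_fct /Ranalysis1.comp /psi /Rdiv; ring.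
Qed.

Lemma psi0 : psi 0 = 0.
Proof. rewrite /psi LL0 ln_1 /=; ring. Qed.

Lemma psi_deriv0 : derivable_pt_lim psi 0 0.
Proof.
have := psi_deriv 0; apply: dlim_eq => // ; rewrite LL0 LL'0 /Rdiv Rinv_1; ring.
Qed.

Lemma w_deriv l : 0 < l ->
  derivable_pt_lim (fun y => psi y / y) l
    (((LL' l / LL l - EE - 2 * K * l) * l - 1 * psi l) / l²).
Proof.
move=> Hl.
have := derivable_pt_lim_div _ _ _ _ _ (psi_deriv l) (derivable_pt_lim_id l) (Rgt_not_eq _ _ Hl).
by apply: dlim_eq.
Qed.

Lemma w_deriv_le l : 0 < l ->
  ((LL' l / LL l - EE - 2 * K * l) * l - 1 * psi l) / l² <= 0.
Proof.
move=> Hl.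
have HL := LL_pos l.
have He := Hent Hl; rewrite Ent_eq in He.
have Hnum : (LL' l / LL l - EE - 2 * K * l) * l - 1 * psi l
    = (l * LL' l - LL l * ln (LL l)) / LL l - K * l ^ 2.
  rewrite /psi; field; lra.
rewrite Hnum.
have : (l * LL' l - LL l * ln (LL l)) / LL l <= K * l ^ 2.
  apply: (Rmult_le_reg_r (LL l)) => //.
  rewrite /Rdiv Rmult_assoc Rinv_l; lra.
move=> H.
have Hi : 0 < / l² by apply: Rinv_0_lt_compat; rewrite /Rsqr; nra.
rewrite /Rdiv; nra.
Qed.

Lemma w_decr a b : 0 < a -> a <= b -> psi b / b <= psi a / a.
Proof.
move=> Ha [Hab|<-]; last lra.
have [cc [Heq Hc]] := MVT_cor2 (fun y => psi y / y) _ _ _ Hab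
   (fun c Hc => w_deriv (Rlt_le_trans _ _ _ Ha (proj1 Hc))).
have := w_deriv_le (Rlt_trans _ _ _ Ha (proj1 Hc)).
move=> H.
have : (((LL' cc / LL cc - EE - 2 * K * cc) * cc - 1 * psi cc) / cc²) * (b - a) <= 0.
  nra.
lra.
Qed.

Lemma herbst l : 0 <= l -> ln (LL l) <= l * EE + K * l ^ 2.
Proof.
move=> [Hl|<-]; last by rewrite LL0 ln_1 /=; lra.
suff : psi l <= 0 by rewrite /psi; lra.
apply: Rnot_lt_le => Hp.
set q := psi l / l.
have Hq : 0 < q by apply: Rdiv_lt_0_compat.
have [d Hd] := psi_deriv0 Hq.
set h := Rmin (d / 2) l.
have Hd0 := cond_pos d.
have Hh0 : 0 < h by apply: Rmin_pos; lra.
have Hhl : h <= l by apply: Rmin_r.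
have Hhd : h < d by have := Rmin_l (d / 2) l; rewrite -/h; lra.
have := Hd h (Rgt_not_eq _ _ Hh0) ltac:(rewrite Rabs_pos_eq; lra).
rewrite Rplus_0_l psi0 Rminus_0_r Rminus_0_r => Habs.
have := Rle_abs (psi h / h); have := w_decr Hh0 Hhl; rewrite -/q.
lra.
Qed.

End Herbst.
Unset Implicit Arguments.

Theorem proposition1p4
  (T : finType) (n : nat)
  (mu : config T n -> R)            (* law of X = (X_1,...,X_n) on T^n *)
  (sigma : R)
  (Fam : (T -> R) -> Prop)          (* the family F *)
  (c : (T -> R) -> R)
  (supc : R)                        (* sup_{f in F} c(f) *)
  (g : config T n -> R)             (* g(x) = sup_{f in F} |sum_j f(x_j)| *)
  (t : R) :
  is_prob mu ->
  dLSI mu (sigma ^ 2) ->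
  (forall f, Fam f -> 0 <= c f) ->
  (forall f, Fam f -> forall x y : T, Rabs (f x - f y) <= c f) ->
  is_lub (fun r => exists f, Fam f /\ r = c f) supc ->
  (forall x : config T n,
     is_lub (fun r => exists f, Fam f /\ r = Rabs (rsum (fun j : 'I_n => f (x j))))
            (g x)) ->
  0 <= t ->
  Prob mu (fun x => Rle_dec (Exp mu g + t) (g x))
  <= 2 * exp (- (t ^ 2) / (15 * sigma ^ 2 * INR n * supc ^ 2)).
Proof.
move=> Hprob Hlsi _ Hc Hsup Hg Ht.
have [mu0 mu1] := Hprob.
have Hd := gdiff Hc Hsup Hg.
have P1 : Prob mu (fun x => Rle_dec (Exp mu g + t) (g x)) <= 1.
  rewrite /Prob -mu1; apply: rsum_le => x; case: Rle_dec => H0 /=; have := mu0 x; lra.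
have Hs2 : 0 <= sigma ^ 2 by apply: pow2_ge_0.
have Hc2 : 0 <= supc ^ 2 by apply: pow2_ge_0.
have Hn : 0 <= INR n by apply: pos_INR.
set D := 15 * sigma ^ 2 * INR n * supc ^ 2.
have HD0 : 0 <= D by rewrite /D; apply: Rmult_le_pos; [apply: Rmult_le_pos; [apply: Rmult_le_pos|] |]; lra.
have Hexp0 : forall y, 1 <= 2 * exp y -> Prob mu (fun x => Rle_dec (Exp mu g + t) (g x)) <= 2 * exp y.
  move=> y H; lra.
case: (Req_dec D 0) => HD.
  apply: Hexp0; rewrite HD /Rdiv Rinv_0 Rmult_0_r exp_0; lra.
case: Ht => Ht; last first.
  apply: Hexp0; rewrite -Ht /= Rmult_0_l Ropp_0 /Rdiv Rmult_0_l exp_0; lra.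
have HDp : 0 < D by lra.
set A := sigma ^ 2 * INR n * supc ^ 2.
have HA : D = 15 * A by rewrite /D /A; ring.
have HAp : 0 < A by lra.
set K := 2 * A.
have HKp : 0 < K by rewrite /K; lra.
have Hent : forall l, 0 < l -> Ent mu (fun x => exp (l * g x)) <= K * l ^ 2 * LL mu g l.
  move=> l Hl.
  have := ent_bound (lam := l) (Rlt_le _ _ Hl) Hprob Hlsi Hs2 Hd.
  have -> : 2 * sigma ^ 2 * (INR n * (l ^ 2 * supc ^ 2)) = K * l ^ 2 by rewrite /K /A; ring.
  done.
set lam := t / (2 * K).
have Hlam : 0 < lam by apply: Rdiv_lt_0_compat; lra.
have Hh := herbst mu0 mu1 Hent (Rlt_le _ _ Hlam).
have HLp := LL_pos g mu0 mu1 lam.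
have HE : EE mu g = Exp mu g by [].
rewrite HE in Hh.
set E := Exp mu g in Hh *.
have Ch : Prob mu (fun x => Rle_dec (E + t) (g x)) <= exp (- lam * (E + t)) * LL mu g lam.
  rewrite /LL -rsum_scal /Prob; apply: rsum_le => x.
  have Hm := mu0 x.
  have -> : exp (- lam * (E + t)) * (mu x * exp (lam * g x)) = mu x * exp (lam * (g x - (E + t))).
    rewrite Rmult_comm Rmult_assoc -exp_plus; f_equal; f_equal; ring.
  case: Rle_dec => H /=.
    have : 1 <= exp (lam * (g x - (E + t))).
      rewrite -exp_0; apply: exp_le; nra.
    nra.
  have := exp_pos (lam * (g x - (E + t))); nra.
apply: (Rle_trans _ _ _ Ch).
have -> : exp (- lam * (E + t)) * LL mu g lam = exp (- lam * (E + t) + ln (LL mu g lam)).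
  by rewrite exp_plus exp_ln.
have Hfin : - lam * (E + t) + ln (LL mu g lam) <= - (t ^ 2) / D.
  have Hq : - lam * (E + t) + (lam * E + K * lam ^ 2) = - (t ^ 2) / (8 * A).
    rewrite /lam /K; field; lra.
  have Hr : - (t ^ 2) / (8 * A) <= - (t ^ 2) / D.
    rewrite HA /Rdiv !Ropp_mult_distr_l_reverse; apply: Ropp_le_contravar.
    apply: Rmult_le_compat_l; first by have := pow2_ge_0 t; lra.
    apply: Rinv_le_contravar; lra.
  lra.
have := exp_le Hfin; have := exp_pos (- (t ^ 2) / D); lra.
Qed.
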